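(* Let $p$ be a random partition that generates the potential for TU games, i.e., $\sum_{\pi\in\Pi(N)}p_N(\pi)\sum_{B\in\pi}v(B)=\mathrm{Pot}(v)$ for all $N\subseteq\mathbf{U}$ and all TU games $v$ on $N$. Then (i) $p_N(\{N\})=\frac1n$ and $p_N(\{N\setminus\{i\},\{i\}\})=\frac{1}{n(n-1)}$ for all $N\subseteq\mathbf{U}$ and $i\in N$ (for the second identity, $n\ge 2$); (ii) for all $N\subseteq\mathbf{U}$ with $n\le 3$, $p_N(\pi)=p^\star_N(\pi)=\frac{\prod_{B\in\pi}(b-1)!}{n!}$ for all $\pi\in\Pi(N)$.
   Context: $\mathbf{U}$ is a finite set of players; cardinalities of $N,S,B$ are $n,s,b$. $\Pi(N)$ is the set of partitions of $N$. A random partition is a family $p=(p_N)_{N\subseteq\mathbf{U}}$ with $p_N$ a probability distribution on $\Pi(N)$. A TU game on $N$ is $v:2^N\to\mathbb{R}$ with $v(\emptyset)=0$. $\mathrm{Pot}$ is the potential for TU games, $\mathrm{Pot}(v)=\sum_{\emptyset\ne S\subseteq N}\frac{(s-1)!(n-s)!}{n!}v(S)$ (the unique map vanishing on the empty game with $\sum_{i\in N}[\mathrm{Pot}(v)-\mathrm{Pot}(v|_{2^{N\setminus\{i\}}})]=v(N)$). *)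

(* Defs.v *)
From HB Require Import structures.
From mathcomp Require Import all_boot all_order all_algebra.
Set Implicit Arguments. Unset Strict Implicit. Unset Printing Implicit Defensive.
Import Order.TTheory GRing.Theory Num.Theory.
Local Open Scope ring_scope.

Definition Partitions (U : finType) (N : {set U}) : {set {set {set U}}} :=
  [set P : {set {set U}} | partition P N].

Definition random_partition (U : finType) (R : realFieldType)
    (p : {set U} -> {set {set U}} -> R) : Prop :=
  forall N : {set U},
    (forall P, P \in Partitions N -> 0 <= p N P) /\
    \sum_(P in Partitions N) p N P = 1.

(* TU game on N: v : 2^N -> R with v(empty) = 0; represented as a function on all
   coalitions, of which only the values on subsets of N matter. *)
Definition TUgame (U : finType) (R : realFieldType) (v : {set U} -> R) : Prop :=
  v set0 = 0.

Definition Pot (U : finType) (R : realFieldType) (N : {set U}) (v : {set U} -> R) : R :=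
  \sum_(S : {set U} | (S \subset N) && (S != set0))
    (((#|S|.-1)`! * (#|N| - #|S|)`!)%:R / (#|N|`!)%:R) * v S.

Definition expected_worth (U : finType) (R : realFieldType)
    (p : {set U} -> {set {set U}} -> R) (N : {set U}) (v : {set U} -> R) : R :=
  \sum_(P in Partitions N) p N P * \sum_(B in P) v B.

Definition generates_Pot (U : finType) (R : realFieldType)
    (p : {set U} -> {set {set U}} -> R) : Prop :=
  forall (N : {set U}) (v : {set U} -> R), TUgame v -> expected_worth p N v = Pot N v.

Definition pstar (U : finType) (R : realFieldType) (N : {set U}) (P : {set {set U}}) : R :=
  (\prod_(B in P) (#|B|.-1)`!)%:R / (#|N|`!)%:R.

(* Main.v *)
Require Import Defs.
From HB Require Import structures.
From mathcomp Require Import all_boot all_order all_algebra.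
From mathcomp Require Import ring lra zify.
Import Order.TTheory GRing.Theory Num.Theory.
Local Open Scope ring_scope.
Set Implicit Arguments. Unset Strict Implicit.

Section Helpers.
Variable U : finType.
Implicit Types N B C D : {set U}.
Implicit Types Q : {set {set U}}.

Lemma L_eq N Q B C x : partition Q N -> B \in Q -> C \in Q -> x \in B -> x \in C -> B = C.
Proof.
move=> hQ BQ CQ xB xC; have tI := partition_trivIset hQ.
by rewrite -(def_pblock tI BQ xB) (def_pblock tI CQ xC).
Qed.

Lemma L_two N Q B C : partition Q N -> B \in Q -> C \in Q -> B :|: C = N ->
  Q = [set B; C].
Proof.
move=> hQ BQ CQ hBC; apply/setP => D; rewrite !inE; apply/idP/idP.
  move=> DQ; have /set0Pn [x xD] := partition_neq0 hQ DQ.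
  have : x \in B :|: C by rewrite hBC (subsetP (partitionS hQ DQ)).
  rewrite inE => /orP [xB|xC].
    by rewrite (L_eq hQ DQ BQ xD xB) eqxx.
  by rewrite (L_eq hQ DQ CQ xD xC) eqxx orbT.
by case/orP => /eqP ->.
Qed.

Lemma L_full N Q : partition Q N -> N \in Q -> Q = [set N].
Proof.
move=> hQ NQ; rewrite (L_two hQ NQ NQ (setUid N)).
by apply/setP => D; rewrite !inE orbb.
Qed.

Lemma L_ncomp N Q B i : partition Q N -> B \in Q -> N :\: B = [set i] ->
  Q = [set B; [set i]].
Proof.
move=> hQ BQ hD.
have iND : i \in N :\: B by rewrite hD set11.
have iN : i \in N by move: iND; rewrite inE => /andP[].
have iB : i \notin B by move: iND; rewrite inE => /andP[].
have covQ := cover_partition hQ.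
have DQ : pblock Q i \in Q by apply: pblock_mem; rewrite covQ.
have iD : i \in pblock Q i by rewrite mem_pblock covQ.
have Di : pblock Q i = [set i].
  apply/eqP; rewrite eqEsubset; apply/andP; split; last by rewrite sub1set.
  apply/subsetP => y yD.
  have yN : y \in N := subsetP (partitionS hQ DQ) y yD.
  case: (boolP (y \in B)) => yB.
    by move: iB; rewrite -(L_eq hQ DQ BQ yD yB) iD.
  by rewrite -hD inE yB yN.
rewrite -Di; apply: (L_two hQ BQ DQ); rewrite Di.
apply/setP => y; rewrite !inE.
have := congr1 (fun S : {set U} => y \in S) hD; rewrite /= !inE.
have := subsetP (partitionS hQ BQ) y.
by case: (y \in B) (y \in N) (y == i) => [] [] [] //= /(_ isT).
Qed.

Lemma L_single N Q : partition Q N -> {in Q, forall B, #|B| = 1%N} ->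
  Q = [set [set x] | x in N].
Proof.
move=> hQ hall; apply/setP => B; apply/idP/imsetP.
  move=> BQ; have /cards1P [x Bx] : #|B| == 1%N by rewrite hall.
  exists x => //; apply: (subsetP (partitionS hQ BQ)); by rewrite Bx set11.
case=> x xN ->.
have covQ := cover_partition hQ.
have DQ : pblock Q x \in Q by apply: pblock_mem; rewrite covQ.
have xD : x \in pblock Q x by rewrite mem_pblock covQ.
have /cards1P [y Dy] : #|pblock Q x| == 1%N by rewrite hall.
by move: xD DQ; rewrite Dy inE => /eqP ->.
Qed.

Lemma classify N Q : partition Q N -> (#|N| <= 3)%N ->
  [\/ Q = [set N], exists2 i, i \in N & Q = [set N :\ i; [set i]],
      (N = set0 /\ Q = set0) | (#|N| = 3%N /\ Q = [set [set x] | x in N])].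
Proof.
move=> hQ h3.
have [N0|/set0Pn [x xN]] := eqVneq N set0.
  by subst; apply: Or43; split => //; apply/eqP; rewrite -partition_set0.
have n1 : (0 < #|N|)%N by apply/card_gt0P; exists x.
case: (boolP [exists B in Q, #|N|.-1 <= #|B|]%N).
  move=> /exists_inP [B BQ hB]; have BN := partitionS hQ BQ.
  have hle := subset_leq_card BN.
  have [hBn|hBn] : #|B| = #|N| \/ #|B| = #|N|.-1 by lia.
    apply: Or41; apply: (L_full hQ).
    suff -> : N = B by [].
    by apply/eqP; rewrite eq_sym eqEcard BN hBn leqnn.
  have : #|N :\: B| == 1%N by rewrite cardsDS // hBn; apply/eqP; lia.
  move=> /cards1P [i hD].
  have iND : i \in N :\: B by rewrite hD set11.
  have iN : i \in N by move: iND; rewrite inE => /andP[].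
  apply: Or42; exists i => //.
  suff <- : B = N :\ i by exact: L_ncomp hQ BQ hD.
  apply/setP => y; rewrite !inE.
  have := congr1 (fun S : {set U} => y \in S) hD; rewrite /= !inE.
  have := subsetP BN y.
  by case: (y \in B) (y \in N) (y == i) => [] [] [] //= /(_ isT).
move=> /exists_inPn hall.
have covQ := cover_partition hQ.
have DQ : pblock Q x \in Q by apply: pblock_mem; rewrite covQ.
have xD : x \in pblock Q x by rewrite mem_pblock covQ.
have := hall _ DQ; rewrite -ltnNge => hlt.
have : (0 < #|pblock Q x|)%N by apply/card_gt0P; exists x.
move=> h0.
have n3 : #|N| = 3%N by lia.
apply: Or44; split => //; apply: (L_single hQ) => B BQ.
have := hall _ BQ; rewrite -ltnNge n3 => h.
have : (0 < #|B|)%N by rewrite card_gt0; exact: partition_neq0 hQ BQ.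
lia.
Qed.

Lemma cardD1' N i : i \in N -> #|N :\ i| = #|N|.-1.
Proof. by move=> iN; rewrite (cardsD1 i N) iN. Qed.

Lemma partD N i : i \in N -> (2 <= #|N|)%N -> partition [set N :\ i; [set i]] N.
Proof.
move=> iN n2.
have Ni0 : N :\ i != set0 by rewrite -card_gt0 cardD1' //; lia.
have h1 : partition [set [set i]] [set i].
  rewrite /partition cover1 eqxx trivIset1 /= inE eq_sym.
  by apply/set0Pn; exists i; rewrite set11.
have := partitionU1 h1 Ni0.
rewrite disjoint_sym disjoints1 !inE eqxx /= => /(_ isT).
by rewrite [N :\ i :|: _]setUC setD1K.
Qed.

Lemma compl1 N i : i \in N -> N :\: (N :\ i) = [set i].
Proof.
move=> iN; apply/setP => y; rewrite !inE.
by case: eqP => [->|] /=; rewrite ?iN //; case: (y \in N).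
Qed.

End Helpers.

Lemma sum_pick (R : realFieldType) (T : finType) (P : pred T) (F : T -> R) X :
  \sum_(Q | P Q) F Q * (Q == X)%:R = if P X then F X else 0.
Proof.
case: (boolP (P X)) => hX.
  rewrite (bigD1 X) //= eqxx mulr1 big1 ?addr0 // => Q /andP[_ /negbTE ->].
  by rewrite mulr0.
rewrite big1 // => Q QP; case: eqP => [E|]; last by rewrite mulr0.
by subst; rewrite QP in hX.
Qed.

Lemma natr_fact_neq0 (R : realFieldType) n : ((n`!)%:R : R) != 0.
Proof. by rewrite pnatr_eq0 -lt0n fact_gt0. Qed.

Lemma natr_S_neq0 (R : realFieldType) n : ((n.+1)%:R : R) != 0.
Proof. by rewrite pnatr_eq0. Qed.

Lemma c_full (R : realFieldType) n : (0 < n)%N ->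
  (((n.-1)`! * (n - n)`!)%:R / (n`!)%:R : R) = 1 / n%:R.
Proof.
case: n => // m _; rewrite subnn fact0 muln1 factS natrM /=.
have h1 := natr_fact_neq0 R m; have h2 := natr_S_neq0 R m.
field; by rewrite h1 andbT addrC natr1.
Qed.

Lemma c_minus1 (R : realFieldType) n : (1 < n)%N ->
  ((((n.-1).-1)`! * (n - n.-1)`!)%:R / (n`!)%:R : R) = 1 / (n%:R * (n.-1)%:R).
Proof.
case: n => // [] [] // m _ /=.
have -> : (m.+2 - m.+1 = 1)%N by lia.
rewrite muln1 !factS !natrM.
have h1 := natr_fact_neq0 R m; have h2 := natr_S_neq0 R m; have h3 := natr_S_neq0 R m.+1.
have hm : 0 <= (m%:R : R) := ler0n _ _.
by field; rewrite h1 andbT !gt_eqF //; lra.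
Qed.

Lemma sum_ind (R : realFieldType) (U : finType) (Q : {set {set U}}) S :
  \sum_(B in Q) ((B == S)%:R : R) = (S \in Q)%:R.
Proof.
case: (boolP (S \in Q)) => h.
  by rewrite (bigD1 S) //= eqxx big1 ?addr0 // => B /andP[_ /negbTE ->].
by rewrite big1 // => B BQ; case: eqP => // E; subst; rewrite BQ in h.
Qed.

Theorem corollary1 (U : finType) (R : realFieldType)
    (p : {set U} -> {set {set U}} -> R) :
  random_partition p -> generates_Pot p ->
  (forall N : {set U}, N != set0 -> p N [set N] = 1 / (#|N|%:R))
  /\ (forall (N : {set U}) (i : U), i \in N -> (2 <= #|N|)%N ->
        p N [set N :\ i; [set i]] = 1 / (#|N|%:R * (#|N|.-1)%:R))
  /\ (forall N : {set U}, (#|N| <= 3)%N ->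
        forall P, P \in Partitions N -> p N P = pstar R N P).
Proof.
move=> hrp hgen.
have K : forall N S : {set U}, S != set0 -> S \subset N ->
  \sum_(Q in Partitions N) p N Q * (S \in Q)%:R =
    ((#|S|.-1)`! * (#|N| - #|S|)`!)%:R / (#|N|`!)%:R.
  move=> N S S0 SN.
  have tu : TUgame (fun B : {set U} => ((B == S)%:R : R)).
    by rewrite /TUgame eq_sym (negbTE S0).
  have E := hgen N _ tu; rewrite /expected_worth /Pot sum_pick SN S0 /= in E.
  rewrite -E; apply: eq_bigr => Q _; by rewrite sum_ind.
have part1 : forall N : {set U}, N != set0 -> p N [set N] = 1 / #|N|%:R.
  move=> N N0.
  have := K N N N0 (subxx N).
  rewrite c_full; last by rewrite card_gt0.
  move=> <-; symmetry.
  rewrite (eq_bigr (fun Q => p N Q * (Q == [set N])%:R)); last first.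
    move=> Q; rewrite inE => hQ.
    have -> : (N \in Q) = (Q == [set N]); last by [].
    by apply/idP/eqP => [NQ|->]; [exact: L_full hQ NQ | exact: set11].
  rewrite sum_pick inE.
  have -> : partition [set N] N by rewrite /partition cover1 eqxx trivIset1 /= inE eq_sym N0.
  by [].
have part2 : forall (N : {set U}) (i : U), i \in N -> (2 <= #|N|)%N ->
        p N [set N :\ i; [set i]] = 1 / (#|N|%:R * (#|N|.-1)%:R).
  move=> N i iN n2.
  have Ni0 : N :\ i != set0 by rewrite -card_gt0 cardD1' //; lia.
  have := K N _ Ni0 (subD1set N i).
  rewrite cardD1' // c_minus1 //.
  move=> <-; symmetry.
  rewrite (eq_bigr (fun Q => p N Q * (Q == [set N :\ i; [set i]])%:R)); last first.
    move=> Q; rewrite inE => hQ.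
    have -> : (N :\ i \in Q) = (Q == [set N :\ i; [set i]]); last by [].
    apply/idP/eqP => [h|->]; last by rewrite !inE eqxx.
    exact: L_ncomp hQ h (compl1 iN).
  by rewrite sum_pick inE partD.
split => //; split => //.
move=> N h3 P; rewrite inE => hP.
case: (classify hP h3) => [E|[i iN E]|[N0 E]|[n3 E]]; subst P.
- have N0 : N != set0 := partition_neq0 hP (set11 N).
  rewrite part1 // /pstar big_set1.
  by rewrite -(c_full R (n:=#|N|)) ?card_gt0 // subnn fact0 muln1.
- have := partition_neq0 hP (setU11 _ _); rewrite -card_gt0 cardD1' // => h1.
  have n2 : (2 <= #|N|)%N by lia.
  have nin : N :\ i \notin [set [set i]].
    rewrite inE; apply/negP => /eqP E; move: (set11 i); rewrite -E !inE eqxx.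
    by [].
  rewrite part2 // /pstar big_setU1 //= big_set1 cards1 cardD1' // muln1.
  rewrite -(c_minus1 R n2).
  rewrite (_ : (#|N| - #|N|.-1 = 1)%N); last by lia.
  by rewrite factS fact0 !muln1.
- subst N.
  have [_ hs] := hrp set0.
  have E : Partitions (set0 : {set U}) = [set set0].
    by apply/setP => Q; rewrite !inE partition_set0.
  rewrite E big_set1 in hs. rewrite hs /pstar big_set0 cards0 /=.
  by rewrite divr1.
- have /card_gt0P [i iN] : (0 < #|N|)%N by rewrite n3.
  set T := [set [set x] | x in N].
  set D := [set N :\ i; [set i]].
  have n2 : (2 <= #|N|)%N by rewrite n3.
  have hD := partD iN n2.
  have cD := cardD1' iN.
  have TD : T != D.
    apply/negP => /eqP E; have : N :\ i \in T by rewrite E !inE eqxx.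
    by case/imsetP => x _ Ex; move: cD; rewrite Ex cards1 n3.
  have pw : forall Q, partition Q N -> ([set i] \in Q) = (Q == T) || (Q == D).
    move=> Q hQ; apply/idP/idP; last first.
      by case/orP => /eqP ->; [apply: imset_f | rewrite !inE eqxx orbT].
    move=> iQ; case: (classify hQ h3) => [E|[j jN E]|[N0 E]|[_ E]]; subst Q.
    + by move: iQ; rewrite inE => /eqP E; move: n3; rewrite -E cards1.
    + move: iQ; rewrite !inE => /orP [/eqP E|/eqP /set1_inj E].
        by move: (cardD1' jN); rewrite -E cards1 n3.
      by subst j; rewrite eqxx orbT.
    + by move: n3; rewrite N0 cards0.
    + by rewrite eqxx.
  have i0 : [set i] != set0 by apply/set0Pn; exists i; rewrite set11.
  have i1 : [set i] \subset N by rewrite sub1set.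
  have := K N [set i] i0 i1.
  rewrite (eq_bigr (fun Q => p N Q * (Q == T)%:R + p N Q * (Q == D)%:R)); last first.
    move=> Q; rewrite inE => hQ; rewrite (pw Q hQ) -mulrDr; congr (_ * _).
    by case: (Q =P T) => [->|_]; rewrite ?(negbTE TD) /= ?addr0 ?add0r.
  rewrite big_split !sum_pick !inE hP hD /= part2 // cards1 n3 => Hs.
  rewrite /pstar big1 ?n3; last by move=> B /imsetP [x _ ->]; rewrite cards1.
  move: Hs; rewrite /= !factS fact0 /=.
  lra.
Qed.
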